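(* Let $R(x,t)>0$, $V_x(x,r,t)$, $V_r(x,r,t)$ be smooth on $\{0\le r\le R(x,t)\}$, and assume the incompressibility condition $\frac{\partial (rV_r)}{\partial r}+r\frac{\partial V_x}{\partial x}=0$ and the streamline boundary condition $\frac{\partial R}{\partial t}+V_x|_{r=R}\frac{\partial R}{\partial x}=V_r|_{r=R}$. Let $D>0$, let $C(x,t)$ be smooth, define $\eta$, $\tilde\eta=\eta-\langle\eta\rangle$ and $\tilde V_x = V_x-\langle V_x\rangle$ as in the context. Suppose $G_2=G_2(x,t)$ (independent of $r$) and a smooth function $W_2(x,r,t)$ with $r\,\partial W_2/\partial r\to 0$ as $r\to0$ and $\frac{\partial W_2}{\partial r}(x,R(x,t),t)=0$ satisfy $$\mathcal{L}W_2 = \frac{\partial}{\partial t}\Big(\frac{\partial C}{\partial x}\tilde\eta\Big) + G_2 - \tilde\eta\,\frac{\partial}{\partial x}\Big(\frac{\partial C}{\partial x}\langle V_x\rangle\Big) + V_x\frac{\partial}{\partial x}\Big(\frac{\partial C}{\partial x}\tilde\eta\Big) + V_r\,\frac{\partial C}{\partial x}\,\frac{\partial\tilde\eta}{\partial r}.$$ Then necessarily $$G_2 = -\frac{1}{R^2}\frac{\partial}{\partial x}\Big(\frac{\partial C}{\partial x}\,\big\langle R^2\,\eta\,\tilde V_x\big\rangle\Big).$$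
   Context: Cylindrical coordinates $(x,r,\theta)$ with axial symmetry, vessel radius $R(x,t)$; $\mathcal{L}f = D\left(\frac{\partial^2 f}{\partial r^2}+\frac1r\frac{\partial f}{\partial r}\right)$. Radial average: $\langle f\rangle(x,t)=\frac{2}{R^2}\int_0^{R} f(x,r,t)\,r\,dr$. $\eta(x,r,t)=\frac{1}{D}\int_0^r\frac{1}{z}\int_0^z\big(V_x(x,s,t)-\langle V_x\rangle(x,t)\big)s\,ds\,dz$. (The right-hand side of the equation for $W_2$ is what one obtains from the second equation of the center manifold hierarchy with $W_0=C$, $W_1=\frac{\partial C}{\partial x}\tilde\eta$, $G_1=-\langle V_x\rangle\frac{\partial C}{\partial x}$.) *)

(* Defs.v *)
From Stdlib Require Import Reals ClassicalEpsilon.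
Open Scope R_scope.

(* Functions of (x, r, t) and of (x, t). *)
Definition F3 := R -> R -> R -> R.
Definition F2 := R -> R -> R.

(* The derivative of a one-variable function at y (the genuine derivative
   whenever it exists; an unspecified value otherwise). *)
Definition pderiv (g : R -> R) (y : R) : R :=
  epsilon (inhabits 0) (fun l => derivable_pt_lim g y l).

Definition dx3 (f : F3) : F3 := fun x r t => pderiv (fun y => f y r t) x.
Definition dr3 (f : F3) : F3 := fun x r t => pderiv (fun y => f x y t) r.
Definition dt3 (f : F3) : F3 := fun x r t => pderiv (fun y => f x r y) t.
Definition dx2 (f : F2) : F2 := fun x t => pderiv (fun y => f y t) x.
Definition dt2 (f : F2) : F2 := fun x t => pderiv (fun y => f x y) t.

(* Riemann integral of f over [a,b] (the genuine value whenever f is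
   Riemann integrable on [a,b]; unspecified otherwise). *)
Definition Rint (f : R -> R) (a b : R) : R :=
  epsilon (inhabits 0)
    (fun v => exists pr : Riemann_integrable f a b, RiemannInt pr = v).

Definition cont3_at (f : F3) (x r t : R) : Prop :=
  forall eps, 0 < eps -> exists delta, 0 < delta /\
    forall x' r' t', Rabs (x' - x) < delta -> Rabs (r' - r) < delta ->
      Rabs (t' - t) < delta -> Rabs (f x' r' t' - f x r t) < eps.

Definition cont2_at (f : F2) (x t : R) : Prop :=
  forall eps, 0 < eps -> exists delta, 0 < delta /\
    forall x' t', Rabs (x' - x) < delta -> Rabs (t' - t) < delta ->
      Rabs (f x' t' - f x t) < eps.

(* C^infinity on an (open) set U of R^3: there is a family of functions
   containing f, closed under the three partial derivatives, all of whose
   members are jointly continuous and have all partial derivatives at every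
   point of U. *)
Definition smooth3_on (U : R -> R -> R -> Prop) (f : F3) : Prop :=
  exists S : F3 -> Prop, S f /\
    forall g, S g ->
      S (dx3 g) /\ S (dr3 g) /\ S (dt3 g) /\
      forall x r t, U x r t ->
        cont3_at g x r t /\
        (exists l, derivable_pt_lim (fun y => g y r t) x l) /\
        (exists l, derivable_pt_lim (fun y => g x y t) r l) /\
        (exists l, derivable_pt_lim (fun y => g x r y) t l).

Definition smooth3 (f : F3) : Prop := smooth3_on (fun _ _ _ => True) f.

Definition smooth2 (f : F2) : Prop :=
  exists S : F2 -> Prop, S f /\
    forall g, S g ->
      S (dx2 g) /\ S (dt2 g) /\
      forall x t,
        cont2_at g x t /\
        (exists l, derivable_pt_lim (fun y => g y t) x l) /\
        (exists l, derivable_pt_lim (fun y => g x y) t l).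

Definition avg (Rad : F2) (f : F3) : F2 :=
  fun x t => 2 / (Rad x t) ^ 2 * Rint (fun r => f x r t * r) 0 (Rad x t).

Definition eta (D : R) (Rad : F2) (Vx : F3) : F3 :=
  fun x r t =>
    / D * Rint (fun z => / z *
                  Rint (fun s => (Vx x s t - avg Rad Vx x t) * s) 0 z) 0 r.

Definition eta_tilde (D : R) (Rad : F2) (Vx : F3) : F3 :=
  fun x r t => eta D Rad Vx x r t - avg Rad (eta D Rad Vx) x t.

Definition V_tilde (Rad : F2) (Vx : F3) : F3 :=
  fun x r t => Vx x r t - avg Rad Vx x t.

Definition Lop (D : R) (f : F3) : F3 :=
  fun x r t => D * (dr3 (dr3 f) x r t + / r * dr3 f x r t).

(* Main.v *)
From Coquelicot Require Import Coquelicot.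
From Stdlib Require Import Reals Lra ClassicalEpsilon Classical FunctionalExtensionality.
Require Import Defs.
Open Scope R_scope.

Lemma pderiv_eq g y l : derivable_pt_lim g y l -> pderiv g y = l.
Proof.
  intros H. unfold pderiv.
  pose proof (epsilon_spec (inhabits 0) (fun l => derivable_pt_lim g y l) (ex_intro _ l H)) as H'.
  exact (uniqueness_limite _ _ _ _ H' H).
Qed.

Lemma Rint_eq f a b : ex_RInt f a b -> Rint f a b = RInt f a b.
Proof.
  intros H. unfold Rint.
  assert (E : exists v, exists pr : Riemann_integrable f a b, RiemannInt pr = v).
  { exists (RiemannInt (ex_RInt_Reals_0 _ _ _ H)). eauto. }
  destruct (epsilon_spec (inhabits 0) _ E) as [pr Hpr].
  rewrite <- Hpr. symmetry. apply RInt_Reals.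
Qed.

Definition unc (f : F3) : R * R * R -> R :=
  fun p => f (fst (fst p)) (snd (fst p)) (snd p).

Lemma ballR x d y : ball x d y <-> Rabs (y - x) < d.
Proof. reflexivity. Qed.

Lemma cont3_iff f x r t : cont3_at f x r t <-> continuous (unc f) ((x, r), t).
Proof.
  split.
  - intros H. unfold continuous. apply filterlim_locally. intros eps.
    destruct (H eps (cond_pos eps)) as [d [dpos Hd]].
    exists (mkposreal d dpos). intros [[x' r'] t'] [[Hx Hr] Ht]. simpl in *.
    apply ballR. apply Hd; assumption.
  - intros H eps Heps. unfold continuous in H.
    apply (proj1 (filterlim_locally _ _)) with (eps := mkposreal eps Heps) in H.
    destruct H as [d Hd]. exists d. split. apply cond_pos.
    intros x' r' t' Hx Hr Ht. apply (Hd ((x', r'), t')).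
    repeat split; assumption.
Qed.
Definition C3 (f : F3) := forall x r t, cont3_at f x r t.
Definition L2 (g : F2) : F3 := fun x r t => g x t.

Lemma C3_mult f g : C3 f -> C3 g -> C3 (fun x r t => f x r t * g x r t).
Proof.
  intros Hf Hg x r t. apply cont3_iff.
  apply (continuous_mult (unc f) (unc g)); apply cont3_iff; auto.
Qed.
Lemma C3_plus f g : C3 f -> C3 g -> C3 (fun x r t => f x r t + g x r t).
Proof.
  intros Hf Hg x r t. apply cont3_iff.
  apply (@continuous_plus _ _ R_NormedModule (unc f) (unc g)); apply cont3_iff; auto.
Qed.
Lemma C3_opp f : C3 f -> C3 (fun x r t => - f x r t).
Proof.
  intros Hf x r t. apply cont3_iff.
  apply (@continuous_opp _ _ R_NormedModule (unc f)); apply cont3_iff; auto.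
Qed.
Lemma C3_minus f g : C3 f -> C3 g -> C3 (fun x r t => f x r t - g x r t).
Proof. intros. apply C3_plus; auto. apply C3_opp; auto. Qed.
Lemma C3_const c : C3 (fun _ _ _ => c).
Proof. intros x r t eps He. exists 1. split. lra. intros. rewrite Rminus_diag, Rabs_R0. auto. Qed.
Lemma C3_r : C3 (fun _ r _ => r).
Proof. intros x r t eps He. exists eps. split. auto. intros. auto. Qed.
Lemma C3_x : C3 (fun x _ _ => x).
Proof. intros x r t eps He. exists eps. split. auto. intros. auto. Qed.
Lemma C3_t : C3 (fun _ _ t => t).
Proof. intros x r t eps He. exists eps. split. auto. intros. auto. Qed.
Lemma C3_inv f : C3 f -> (forall x r t, f x r t <> 0) -> C3 (fun x r t => / f x r t).
Proof.
  intros Hf Hn x r t. apply cont3_iff.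
  apply (continuous_comp (unc f) Rinv). apply cont3_iff; auto.
  apply continuous_Rinv. apply Hn.
Qed.
Lemma C3_L2 g : (forall x t, cont2_at g x t) -> C3 (L2 g).
Proof.
  intros Hg x r t eps He. destruct (Hg x t eps He) as [d [dp Hd]].
  exists d. split; auto. intros. unfold L2. apply Hd; auto.
Qed.
Lemma C3_comp_r f h : C3 f -> C3 (L2 h) -> C3 (fun x r t => f x (h x t) t).
Proof.
  intros Hf Hh x r t eps He.
  destruct (Hf x (h x t) t eps He) as [d [dp Hd]].
  destruct (Hh x r t d dp) as [d2 [dp2 Hd2]].
  exists (Rmin d d2). split. apply Rmin_pos; auto.
  intros x' r' t' Hx Hr Ht. apply Hd.
  - eapply Rlt_le_trans; [apply Hx| apply Rmin_l].
  - unfold L2 in Hd2. apply (Hd2 x' r' t'); eapply Rlt_le_trans; eauto; apply Rmin_r.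
  - eapply Rlt_le_trans; [apply Ht| apply Rmin_l].
Qed.
Lemma tube f x0 t0 lo hi : C3 f ->
  forall eps, 0 < eps -> exists d, 0 < d /\
   forall r, lo <= r <= hi -> forall x r' t, Rabs (x - x0) < d -> Rabs (r' - r) < d ->
     Rabs (t - t0) < d -> Rabs (f x r' t - f x0 r t0) < eps.
Proof.
  intros Hf eps He.
  assert (Hc : forall s, {d : R | 0 < d /\ forall x r' t, Rabs (x - x0) < d ->
      Rabs (r' - s) < d -> Rabs (t - t0) < d -> Rabs (f x r' t - f x0 s t0) < eps/2}).
  { intros s. apply constructive_indefinite_description. apply (Hf x0 s t0). lra. }
  assert (Hp : forall s, 0 < proj1_sig (Hc s) / 2).
  { intros s. pose proof (proj1 (proj2_sig (Hc s))). lra. }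
  destruct (compactness_value_1d lo hi (fun s => mkposreal _ (Hp s))) as [d Hd].
  exists d. split. apply cond_pos.
  intros r Hr x r' t Hx Hr' Ht.
  specialize (Hd r Hr).
  apply NNPP. intros Hneg. apply Hd. intros [s [Hs [Hrs Hds]]]. apply Hneg.
  simpl in Hrs, Hds.
  pose proof (proj2_sig (Hc s)) as [dsp Hds']. set (ds := proj1_sig (Hc s)) in *.
  assert (A1 : Rabs (f x r' t - f x0 s t0) < eps/2).
  { apply Hds'.
    - pose proof (cond_pos d). lra.
    - replace (r' - s) with ((r' - r) + (r - s)) by ring.
      eapply Rle_lt_trans. apply Rabs_triang. lra.
    - pose proof (cond_pos d). lra. }
  assert (A2 : Rabs (f x0 r t0 - f x0 s t0) < eps/2).
  { apply Hds'.
    - rewrite Rminus_diag, Rabs_R0. auto.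
    - lra.
    - rewrite Rminus_diag, Rabs_R0. auto. }
  replace (f x r' t - f x0 r t0) with ((f x r' t - f x0 s t0) - (f x0 r t0 - f x0 s t0)) by ring.
  eapply Rle_lt_trans. apply Rabs_triang. rewrite Rabs_Ropp. lra.
Qed.
Lemma c2d_cont (phi : R -> R -> R) u v : continuity_2d_pt phi u v -> continuous (phi u) v.
Proof.
  intros H. unfold continuous. apply filterlim_locally. intros eps.
  destruct (H eps) as [d Hd]. exists d. intros y Hy. apply ballR. apply Hd.
  rewrite Rminus_diag, Rabs_R0. apply cond_pos. exact Hy.
Qed.

Lemma C3_c2d_xr f t : C3 f -> forall u v, continuity_2d_pt (fun u v => f u v t) u v.
Proof.
  intros Hf u v eps. destruct (Hf u v t eps (cond_pos eps)) as [d [dp Hd]].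
  exists (mkposreal d dp). intros a b Ha Hb. apply Hd; auto.
  rewrite Rminus_diag, Rabs_R0; auto.
Qed.
Lemma C3_c2d_tr f x : C3 f -> forall u v, continuity_2d_pt (fun u v => f x v u) u v.
Proof.
  intros Hf u v eps. destruct (Hf x v u eps (cond_pos eps)) as [d [dp Hd]].
  exists (mkposreal d dp). intros a b Ha Hb. apply Hd; auto.
  rewrite Rminus_diag, Rabs_R0; auto.
Qed.
Lemma C3_cont_r f x t z : C3 f -> continuous (fun r => f x r t) z.
Proof. intros Hf. apply (c2d_cont (fun u v => f u v t) x z). apply C3_c2d_xr; auto. Qed.

Lemma C3_exRInt f x t a b : C3 f -> ex_RInt (fun r => f x r t) a b.
Proof. intros Hf. apply (@ex_RInt_continuous R_CompleteNormedModule). intros. apply C3_cont_r; auto. Qed.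

Lemma LB2_fixed (phi psi : R -> R -> R) :
  (forall u v, continuity_2d_pt phi u v) ->
  (forall u v, is_derive (fun y => phi y v) u (psi u v)) ->
  (forall u v, continuity_2d_pt psi u v) ->
  forall u a b, is_derive (fun y => RInt (phi y) a b) u (RInt (psi u) a b).
Proof.
  intros Hc Hd Hpc u a b.
  assert (HD : forall u v, Derive (fun y => phi y v) u = psi u v).
  { intros. apply is_derive_unique. apply Hd. }
  replace (RInt (psi u) a b) with (RInt (fun v => Derive (fun y => phi y v) u) a b).
  2:{ apply RInt_ext. intros. rewrite HD. auto. }
  apply is_derive_RInt_param.
  - exists (mkposreal 1 Rlt_0_1). intros. eexists. apply Hd.
  - intros. eapply continuity_2d_pt_ext. 2: apply (Hpc u t). intros; simpl. rewrite HD; auto.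
  - exists (mkposreal 1 Rlt_0_1). intros. apply (@ex_RInt_continuous R_CompleteNormedModule). intros. apply c2d_cont. auto.
Qed.

Lemma LB2_var (phi psi : R -> R -> R) (bnd : R -> R) :
  (forall u v, continuity_2d_pt phi u v) ->
  (forall u v, is_derive (fun y => phi y v) u (psi u v)) ->
  (forall u v, continuity_2d_pt psi u v) ->
  forall u db, is_derive bnd u db ->
  is_derive (fun y => RInt (phi y) 0 (bnd y)) u (RInt (psi u) 0 (bnd u) + phi u (bnd u) * db).
Proof.
  intros Hc Hd Hpc u db Hb.
  assert (HD : forall u v, Derive (fun y => phi y v) u = psi u v).
  { intros. apply is_derive_unique. apply Hd. }
  assert (HI : forall y a b, ex_RInt (phi y) a b).
  { intros. apply (@ex_RInt_continuous R_CompleteNormedModule). intros. apply c2d_cont. auto. }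
  assert (HC : forall u v, continuity_2d_pt (fun u v => Derive (fun z => phi z v) u) u v).
  { intros. eapply continuity_2d_pt_ext. 2: apply (Hpc u0 v). intros; simpl. rewrite HD; auto. }
  pose proof (is_derive_RInt_param_bound_comp phi (fun _ => 0) bnd u 0 db) as H.
  replace (RInt (psi u) 0 (bnd u) + phi u (bnd u) * db) with
     (RInt (fun t => Derive (fun u0 => phi u0 t) u) 0 (bnd u) + - phi u 0 * 0 + phi u (bnd u) * db).
  2:{ rewrite (RInt_ext _ (psi u)). ring. intros. rewrite HD. auto. }
  apply H.
  - exists (mkposreal 1 Rlt_0_1). intros. auto.
  - exists (mkposreal 1 Rlt_0_1). exists (mkposreal 1 Rlt_0_1). intros. auto.
  - exists (mkposreal 1 Rlt_0_1). exists (mkposreal 1 Rlt_0_1). intros. auto.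
  - apply is_derive_Reals, derivable_pt_lim_const.
  - exact Hb.
  - exists (mkposreal 1 Rlt_0_1). exists (mkposreal 1 Rlt_0_1). intros. eexists. apply Hd.
  - intros. apply HC.
  - exists (mkposreal 1 Rlt_0_1). intros. apply HC.
  - exists (mkposreal 1 Rlt_0_1). intros. apply HC.
  - apply continuity_pt_filterlim. apply c2d_cont. auto.
  - apply continuity_pt_filterlim. apply c2d_cont. auto.
Qed.
Lemma abs_RInt_bound g a b M : ex_RInt g a b ->
  (forall z, Rmin a b <= z <= Rmax a b -> Rabs (g z) <= M) ->
  Rabs (RInt g a b) <= Rabs (b - a) * M.
Proof.
  intros Hi Hb. destruct (Rle_dec a b) as [Hab|Hab].
  - rewrite (Rabs_right (b - a)) by lra. apply abs_RInt_le_const; auto.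
    intros z Hz. apply Hb. rewrite Rmin_left, Rmax_right; lra.
  - rewrite <- (opp_RInt_swap (V := R_CompleteNormedModule)) by (apply ex_RInt_swap; auto).
    change (Rabs (- RInt g b a) <= Rabs (b - a) * M). rewrite Rabs_Ropp.
    rewrite (Rabs_left (b - a)) by lra. replace (- (b - a)) with (a - b) by ring.
    apply abs_RInt_le_const. lra. apply ex_RInt_swap; auto.
    intros z Hz. apply Hb. rewrite Rmin_right, Rmax_left; lra.
Qed.

Lemma locbound f x0 t0 lo hi : C3 f -> lo <= hi -> exists d M, 0 < d /\ 0 < M /\
  forall x r t, Rabs (x - x0) < d -> lo <= r <= hi -> Rabs (t - t0) < d -> Rabs (f x r t) <= M.
Proof.
  intros Hf Hlh.
  destruct (tube f x0 t0 lo hi Hf 1 Rlt_0_1) as [d [dp Hd]].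
  destruct (continuity_ab_maj (fun r => Rabs (f x0 r t0)) lo hi Hlh) as [m [Hm Hm2]].
  { intros c Hc. apply (continuity_pt_comp (fun r => f x0 r t0) Rabs).
    apply continuity_pt_filterlim. apply C3_cont_r; auto. apply Rcontinuity_abs. }
  exists d, (Rabs (f x0 m t0) + 1). split. auto. split. pose proof (Rabs_pos (f x0 m t0)). lra.
  intros x r t Hx Hr Ht.
  specialize (Hd r Hr x r t Hx). rewrite Rminus_diag, Rabs_R0 in Hd. specialize (Hd dp Ht).
  specialize (Hm r Hr). simpl in Hm.
  pose proof (Rabs_triang_inv (f x r t) (f x0 r t0)). lra.
Qed.

Lemma PCI f : C3 f -> C3 (fun x r t => RInt (fun z => f x z t) 0 r).
Proof.
  intros Hf x0 r0 t0 eps He.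
  set (lo := Rmin 0 r0 - 1). set (hi := Rmax 0 r0 + 1).
  assert (Hlh : lo <= hi). { unfold lo, hi. pose proof (Rmin_Rmax 0 r0). lra. }
  destruct (locbound f x0 t0 lo hi Hf Hlh) as [d1 [M [d1p [Mp HM]]]].
  assert (He1 : 0 < eps / (2 * (Rabs r0 + 1))).
  { apply Rdiv_lt_0_compat. auto. pose proof (Rabs_pos r0). lra. }
  destruct (tube f x0 t0 lo hi Hf _ He1) as [d2 [d2p Hd2]].
  assert (He2 : 0 < eps / (2 * M)). { apply Rdiv_lt_0_compat; lra. }
  exists (Rmin (Rmin d1 d2) (Rmin 1 (eps / (2 * M)))).
  split. repeat apply Rmin_pos; auto; lra.
  intros x r t Hx Hr Ht.
  pose proof (Rmin_l (Rmin d1 d2) (Rmin 1 (eps / (2 * M)))) as m1.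
  pose proof (Rmin_r (Rmin d1 d2) (Rmin 1 (eps / (2 * M)))) as m2.
  pose proof (Rmin_l d1 d2). pose proof (Rmin_r d1 d2).
  pose proof (Rmin_l 1 (eps / (2 * M))). pose proof (Rmin_r 1 (eps / (2 * M))).
  assert (I1 : ex_RInt (fun z => f x z t) 0 r0) by (apply C3_exRInt; auto).
  assert (I2 : ex_RInt (fun z => f x z t) r0 r) by (apply C3_exRInt; auto).
  assert (I3 : ex_RInt (fun z => f x0 z t0) 0 r0) by (apply C3_exRInt; auto).
  assert (E1 : RInt (fun z => f x z t) 0 r = RInt (fun z => f x z t) 0 r0 + RInt (fun z => f x z t) r0 r).
  { symmetry. apply (RInt_Chasles (V := R_CompleteNormedModule)); auto. }
  assert (E2 : RInt (fun z => f x z t - f x0 z t0) 0 r0 = RInt (fun z => f x z t) 0 r0 - RInt (fun z => f x0 z t0) 0 r0).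
  { apply (RInt_minus (V := R_CompleteNormedModule)); auto. }
  assert (B1 : Rabs (RInt (fun z => f x z t) r0 r) <= Rabs (r - r0) * M).
  { apply abs_RInt_bound; auto. intros z Hz. apply HM. lra.
    unfold lo, hi. pose proof (Rmin_r 0 r0). pose proof (Rmax_r 0 r0).
    assert (Hr1 : Rabs (r - r0) < 1) by lra. destruct (Rabs_def2 _ _ Hr1).
    assert (Rmin r0 r >= r0 - 1) by (unfold Rmin; destruct Rle_dec; lra).
    assert (Rmax r0 r <= r0 + 1) by (unfold Rmax; destruct Rle_dec; lra).
    lra. lra. }
  assert (B2 : Rabs (RInt (fun z => f x z t - f x0 z t0) 0 r0) <= Rabs (r0 - 0) * (eps / (2 * (Rabs r0 + 1)))).
  { apply abs_RInt_bound. apply (ex_RInt_minus (V := R_NormedModule)); auto.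
    intros z Hz. left. apply Hd2. unfold lo, hi. pose proof (Rmin_l 0 r0). pose proof (Rmax_r 0 r0).
    pose proof (Rmin_r 0 r0). pose proof (Rmax_l 0 r0). lra.
    lra. rewrite Rminus_diag, Rabs_R0; auto. lra. }
  rewrite E1.
  replace (RInt (fun z => f x z t) 0 r0 + RInt (fun z => f x z t) r0 r - RInt (fun z => f x0 z t0) 0 r0)
    with (RInt (fun z => f x z t - f x0 z t0) 0 r0 + RInt (fun z => f x z t) r0 r) by (rewrite E2; ring).
  eapply Rle_lt_trans. apply Rabs_triang.
  assert (Rabs (r - r0) * M < eps / 2).
  { apply Rlt_le_trans with (eps / (2 * M) * M). apply Rmult_lt_compat_r; lra.
    right. field. lra. }
  assert (Rabs (r0 - 0) * (eps / (2 * (Rabs r0 + 1))) < eps / 2).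
  { rewrite Rminus_0_r. pose proof (Rabs_pos r0).
    apply Rlt_le_trans with ((Rabs r0 + 1) * (eps / (2 * (Rabs r0 + 1)))).
    apply Rmult_lt_compat_r; lra. right. field. lra. }
  lra.
Qed.
Lemma c3_mult_at f g x r t : cont3_at f x r t -> cont3_at g x r t ->
  cont3_at (fun x r t => f x r t * g x r t) x r t.
Proof.
  intros Hf Hg. apply cont3_iff.
  apply (continuous_mult (unc f) (unc g)); apply cont3_iff; auto.
Qed.
Lemma c3_invr_at x r t : r <> 0 -> cont3_at (fun _ r _ => / r) x r t.
Proof.
  intros Hr. apply cont3_iff. unfold unc.
  apply (continuous_comp (fun p : R * R * R => snd (fst p)) Rinv).
  - apply (continuous_comp (fun p : R * R * R => fst p) snd).
    apply continuous_fst. simpl. apply continuous_snd.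
  - apply continuous_Rinv. exact Hr.
Qed.

Definition Kop (f : F3) : F3 := fun x z t => / z * RInt (fun s => f x s t * s) 0 z.

Lemma C3_K f : C3 f -> C3 (Kop f).
Proof.
  intros Hf x0 z0 t0.
  assert (Hfr : C3 (fun x r t => f x r t * r)) by (apply C3_mult; auto; apply C3_r).
  destruct (Req_dec z0 0) as [Hz|Hz].
  2:{ apply (c3_mult_at (fun _ r _ => / r) (fun x z t => RInt (fun s => f x s t * s) 0 z)).
      apply c3_invr_at; auto. apply (PCI _ Hfr). }
  subst z0. intros eps He.
  destruct (locbound f x0 t0 (-1) 1 Hf) as [d1 [M [d1p [Mp HM]]]]. lra.
  assert (He2 : 0 < eps / M) by (apply Rdiv_lt_0_compat; lra).
  exists (Rmin d1 (Rmin 1 (eps / M))). split. repeat apply Rmin_pos; lra.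
  pose proof (Rmin_l d1 (Rmin 1 (eps / M))). pose proof (Rmin_r d1 (Rmin 1 (eps / M))).
  pose proof (Rmin_l 1 (eps / M)). pose proof (Rmin_r 1 (eps / M)).
  intros x z t Hx Hz Ht. unfold Kop. rewrite RInt_point. change (zero : R) with 0.
  rewrite Rmult_0_r, Rminus_0_r. rewrite Rminus_0_r in Hz.
  destruct (Req_dec z 0) as [Hz0|Hz0].
  { subst z. rewrite RInt_point. change (zero : R) with 0. rewrite Rmult_0_r, Rabs_R0. auto. }
  rewrite Rabs_mult. rewrite Rabs_inv.
  assert (Hza : 0 < Rabs z) by (apply Rabs_pos_lt; auto).
  assert (B : Rabs (RInt (fun s => f x s t * s) 0 z) <= Rabs (z - 0) * (M * Rabs z)).
  { apply abs_RInt_bound. apply (C3_exRInt (fun x s t => f x s t * s)); auto.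
    intros s Hs. rewrite Rabs_mult.
    assert (Rabs s <= Rabs z).
    { unfold Rmin, Rmax in Hs. destruct (Rle_dec 0 z).
      rewrite (Rabs_right z), Rabs_right; lra.
      rewrite (Rabs_left z), Rabs_left1; lra. }
    assert (Hs1 : Rabs s < 1) by lra. destruct (Rabs_def2 _ _ Hs1).
    apply Rmult_le_compat; try apply Rabs_pos; auto.
    apply HM; lra. }
  rewrite Rminus_0_r in B.
  apply Rle_lt_trans with (/ Rabs z * (Rabs z * (M * Rabs z))).
  apply Rmult_le_compat_l. left. apply Rinv_0_lt_compat; auto. auto.
  replace (/ Rabs z * (Rabs z * (M * Rabs z))) with (M * Rabs z) by (field; lra).
  apply Rlt_le_trans with (M * (eps / M)). apply Rmult_lt_compat_l; lra. right; field; lra.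
Qed.
Lemma F3_ext (f g : F3) : (forall x r t, f x r t = g x r t) -> f = g.
Proof.
  intros H. apply functional_extensionality; intro x.
  apply functional_extensionality; intro r. apply functional_extensionality; intro t. auto.
Qed.

Definition P (f : F3) := C3 f /\ C3 (dx3 f) /\ C3 (dt3 f) /\
  (forall x r t, derivable_pt_lim (fun y => f y r t) x (dx3 f x r t)) /\
  (forall x r t, derivable_pt_lim (fun y => f x r y) t (dt3 f x r t)).

Lemma dx3_eq f x r t l : derivable_pt_lim (fun y => f y r t) x l -> dx3 f x r t = l.
Proof. apply pderiv_eq. Qed.
Lemma dt3_eq f x r t l : derivable_pt_lim (fun y => f x r y) t l -> dt3 f x r t = l.
Proof. apply pderiv_eq. Qed.
Lemma dr3_eq f x r t l : derivable_pt_lim (fun y => f x y t) r l -> dr3 f x r t = l.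
Proof. apply pderiv_eq. Qed.

Lemma P_C3 f : P f -> C3 f. Proof. intros H; apply H. Qed.
Lemma P_dx f x r t : P f -> derivable_pt_lim (fun y => f y r t) x (dx3 f x r t).
Proof. intros H; apply H. Qed.
Lemma P_dt f x r t : P f -> derivable_pt_lim (fun y => f x r y) t (dt3 f x r t).
Proof. intros H; apply H. Qed.

Lemma dx3_mult f g : P f -> P g -> dx3 (fun x r t => f x r t * g x r t) =
  (fun x r t => dx3 f x r t * g x r t + f x r t * dx3 g x r t).
Proof.
  intros Hf Hg. apply F3_ext. intros. apply dx3_eq.
  apply (derivable_pt_lim_mult (fun y => f y r t) (fun y => g y r t)); apply Hf || apply Hg.
Qed.
Lemma dt3_mult f g : P f -> P g -> dt3 (fun x r t => f x r t * g x r t) =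
  (fun x r t => dt3 f x r t * g x r t + f x r t * dt3 g x r t).
Proof.
  intros Hf Hg. apply F3_ext. intros. apply dt3_eq.
  apply (derivable_pt_lim_mult (fun y => f x r y) (fun y => g x r y)); apply Hf || apply Hg.
Qed.
Lemma P_mult f g : P f -> P g -> P (fun x r t => f x r t * g x r t).
Proof.
  intros Hf Hg. pose proof Hf as [a1 [a2 [a3 [a4 a5]]]]. pose proof Hg as [b1 [b2 [b3 [b4 b5]]]].
  split. apply C3_mult; auto.
  split. rewrite dx3_mult by auto. apply C3_plus; apply C3_mult; auto.
  split. rewrite dt3_mult by auto. apply C3_plus; apply C3_mult; auto.
  split; intros; [rewrite dx3_mult by auto | rewrite dt3_mult by auto].
  apply (derivable_pt_lim_mult (fun y => f y r t) (fun y => g y r t)); auto.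
  apply (derivable_pt_lim_mult (fun y => f x r y) (fun y => g x r y)); auto.
Qed.

Lemma dx3_plus f g : P f -> P g -> dx3 (fun x r t => f x r t + g x r t) =
  (fun x r t => dx3 f x r t + dx3 g x r t).
Proof.
  intros Hf Hg. apply F3_ext. intros. apply dx3_eq.
  apply (derivable_pt_lim_plus (fun y => f y r t) (fun y => g y r t)); apply Hf || apply Hg.
Qed.
Lemma dt3_plus f g : P f -> P g -> dt3 (fun x r t => f x r t + g x r t) =
  (fun x r t => dt3 f x r t + dt3 g x r t).
Proof.
  intros Hf Hg. apply F3_ext. intros. apply dt3_eq.
  apply (derivable_pt_lim_plus (fun y => f x r y) (fun y => g x r y)); apply Hf || apply Hg.
Qed.
Lemma P_plus f g : P f -> P g -> P (fun x r t => f x r t + g x r t).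
Proof.
  intros Hf Hg. pose proof Hf as [a1 [a2 [a3 [a4 a5]]]]. pose proof Hg as [b1 [b2 [b3 [b4 b5]]]].
  split. apply C3_plus; auto.
  split. rewrite dx3_plus by auto. apply C3_plus; auto.
  split. rewrite dt3_plus by auto. apply C3_plus; auto.
  split; intros; [rewrite dx3_plus by auto | rewrite dt3_plus by auto].
  apply (derivable_pt_lim_plus (fun y => f y r t) (fun y => g y r t)); auto.
  apply (derivable_pt_lim_plus (fun y => f x r y) (fun y => g x r y)); auto.
Qed.

Lemma dx3_const c : dx3 (fun _ _ _ => c) = (fun _ _ _ => 0).
Proof. apply F3_ext. intros. apply dx3_eq. apply (derivable_pt_lim_const c). Qed.
Lemma dt3_const c : dt3 (fun _ _ _ => c) = (fun _ _ _ => 0).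
Proof. apply F3_ext. intros. apply dt3_eq. apply (derivable_pt_lim_const c). Qed.
Lemma P_const c : P (fun _ _ _ => c).
Proof.
  split. apply C3_const. split. rewrite dx3_const. apply C3_const.
  split. rewrite dt3_const. apply C3_const.
  split; intros; [rewrite dx3_const|rewrite dt3_const]; apply (derivable_pt_lim_const c).
Qed.
Lemma dx3_r : dx3 (fun _ r _ => r) = (fun _ _ _ => 0).
Proof. apply F3_ext. intros. apply dx3_eq. apply (derivable_pt_lim_const r). Qed.
Lemma dt3_r : dt3 (fun _ r _ => r) = (fun _ _ _ => 0).
Proof. apply F3_ext. intros. apply dt3_eq. apply (derivable_pt_lim_const r). Qed.
Lemma P_r : P (fun _ r _ => r).
Proof.
  split. apply C3_r. split. rewrite dx3_r. apply C3_const.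
  split. rewrite dt3_r. apply C3_const.
  split; intros; [rewrite dx3_r|rewrite dt3_r]; apply (derivable_pt_lim_const r).
Qed.
Lemma P_minus f g : P f -> P g -> P (fun x r t => f x r t - g x r t).
Proof.
  intros Hf Hg.
  replace (fun x r t => f x r t - g x r t) with (fun x r t => f x r t + (fun _ _ _ => -1) x r t * g x r t).
  apply P_plus; auto. apply P_mult; auto. apply P_const.
  apply F3_ext. intros. ring.
Qed.

Lemma dx3_inv f : P f -> (forall x r t, f x r t <> 0) ->
  dx3 (fun x r t => / f x r t) = (fun x r t => - dx3 f x r t / f x r t ^ 2).
Proof.
  intros Hf Hn. apply F3_ext. intros. apply dx3_eq. apply is_derive_Reals.
  apply (is_derive_inv (fun y => f y r t)). apply is_derive_Reals. apply Hf. auto.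
Qed.
Lemma dt3_inv f : P f -> (forall x r t, f x r t <> 0) ->
  dt3 (fun x r t => / f x r t) = (fun x r t => - dt3 f x r t / f x r t ^ 2).
Proof.
  intros Hf Hn. apply F3_ext. intros. apply dt3_eq. apply is_derive_Reals.
  apply (is_derive_inv (fun y => f x r y)). apply is_derive_Reals. apply Hf. auto.
Qed.
Lemma P_inv f : P f -> (forall x r t, f x r t <> 0) -> P (fun x r t => / f x r t).
Proof.
  intros Hf Hn. pose proof Hf as [a1 [a2 [a3 [a4 a5]]]].
  assert (C2 : C3 (fun x r t => / f x r t ^ 2)).
  { apply C3_inv. replace (fun x r t => f x r t ^ 2) with (fun x r t => f x r t * f x r t).
    apply C3_mult; auto. apply F3_ext; intros; ring. intros. apply pow_nonzero. auto. }
  split. apply C3_inv; auto.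
  split. rewrite dx3_inv by auto. unfold Rdiv. apply C3_mult; auto. apply C3_opp; auto.
  split. rewrite dt3_inv by auto. unfold Rdiv. apply C3_mult; auto. apply C3_opp; auto.
  split; intros; [rewrite dx3_inv by auto | rewrite dt3_inv by auto]; apply is_derive_Reals.
  apply (is_derive_inv (fun y => f y r t)). apply is_derive_Reals. apply Hf. auto.
  apply (is_derive_inv (fun y => f x r y)). apply is_derive_Reals. apply Hf. auto.
Qed.

Lemma P_smooth2 (g : F2) (S : F2 -> Prop) :
  (forall g, S g -> S (dx2 g) /\ S (dt2 g) /\ forall x t, cont2_at g x t /\
     (exists l, derivable_pt_lim (fun y => g y t) x l) /\ (exists l, derivable_pt_lim (fun y => g x y) t l)) ->
  S g -> P (L2 g).
Proof.
  intros HS Hg. destruct (HS g Hg) as [Sx [St Hc]].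
  split. apply C3_L2. apply Hc.
  split. apply (C3_L2 (dx2 g)). apply (HS _ Sx).
  split. apply (C3_L2 (dt2 g)). apply (HS _ St).
  split; intros.
  - destruct (proj1 (proj2 (Hc x t))) as [l Hl]. unfold L2. replace (dx3 (fun x _ t => g x t) x r t) with l. auto.
    symmetry. apply dx3_eq. auto.
  - destruct (proj2 (proj2 (Hc x t))) as [l Hl]. unfold L2. replace (dt3 (fun x _ t => g x t) x r t) with l. auto.
    symmetry. apply dt3_eq. auto.
Qed.
Lemma dl_pderiv g y l : derivable_pt_lim g y l -> derivable_pt_lim g y (pderiv g y).
Proof. intros H. rewrite (pderiv_eq g y l H). auto. Qed.

Definition I1 (f : F3) : F3 := fun x r t => RInt (fun z => f x z t) 0 r.

Lemma dx3_I1 f : P f -> dx3 (I1 f) = I1 (dx3 f).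
Proof.
  intros Hf. pose proof Hf as [a1 [a2 [a3 [a4 a5]]]]. apply F3_ext. intros x r t. apply dx3_eq.
  apply is_derive_Reals. unfold I1.
  apply (LB2_fixed (fun u v => f u v t) (fun u v => dx3 f u v t)).
  apply C3_c2d_xr; auto. intros. apply is_derive_Reals. auto. apply C3_c2d_xr; auto.
Qed.
Lemma dt3_I1 f : P f -> dt3 (I1 f) = I1 (dt3 f).
Proof.
  intros Hf. pose proof Hf as [a1 [a2 [a3 [a4 a5]]]]. apply F3_ext. intros x r t. apply dt3_eq.
  apply is_derive_Reals. unfold I1.
  apply (LB2_fixed (fun u v => f x v u) (fun u v => dt3 f x v u)).
  apply C3_c2d_tr; auto. intros. apply is_derive_Reals. auto. apply C3_c2d_tr; auto.
Qed.
Lemma P_I1 f : P f -> P (I1 f).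
Proof.
  intros Hf. pose proof Hf as [a1 [a2 [a3 [a4 a5]]]].
  split. apply PCI; auto.
  split. rewrite dx3_I1 by auto. apply PCI; auto.
  split. rewrite dt3_I1 by auto. apply PCI; auto.
  split; intros; [rewrite dx3_I1 by auto | rewrite dt3_I1 by auto]; apply is_derive_Reals; unfold I1.
  apply (LB2_fixed (fun u v => f u v t) (fun u v => dx3 f u v t)).
  apply C3_c2d_xr; auto. intros. apply is_derive_Reals. auto. apply C3_c2d_xr; auto.
  apply (LB2_fixed (fun u v => f x v u) (fun u v => dt3 f x v u)).
  apply C3_c2d_tr; auto. intros. apply is_derive_Reals. auto. apply C3_c2d_tr; auto.
Qed.

Lemma P_fr f : P f -> P (fun x r t => f x r t * r).
Proof. intros. apply P_mult; auto. apply P_r. Qed.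
Lemma dx3_fr f : P f -> dx3 (fun x r t => f x r t * r) = (fun x r t => dx3 f x r t * r).
Proof. intros Hf. rewrite (dx3_mult f (fun _ r _ => r)); auto. rewrite dx3_r. apply F3_ext; intros; ring. apply P_r. Qed.
Lemma dt3_fr f : P f -> dt3 (fun x r t => f x r t * r) = (fun x r t => dt3 f x r t * r).
Proof. intros Hf. rewrite (dt3_mult f (fun _ r _ => r)); auto. rewrite dt3_r. apply F3_ext; intros; ring. apply P_r. Qed.

Lemma Kop_I1 f : Kop f = fun x z t => / z * I1 (fun x s t => f x s t * s) x z t.
Proof. reflexivity. Qed.

Lemma dx3_K f : P f -> dx3 (Kop f) = Kop (dx3 f).
Proof.
  intros Hf. apply F3_ext. intros x z t. apply dx3_eq. rewrite Kop_I1.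
  replace (Kop (dx3 f) x z t) with (/ z * dx3 (I1 (fun x s t => f x s t * s)) x z t).
  apply derivable_pt_lim_scal with (f := fun y => I1 (fun x s t => f x s t * s) y z t).
  apply P_dx. apply P_I1. apply P_fr; auto.
  rewrite dx3_I1 by (apply P_fr; auto). rewrite dx3_fr by auto. reflexivity.
Qed.
Lemma dt3_K f : P f -> dt3 (Kop f) = Kop (dt3 f).
Proof.
  intros Hf. apply F3_ext. intros x z t. apply dt3_eq. rewrite Kop_I1.
  replace (Kop (dt3 f) x z t) with (/ z * dt3 (I1 (fun x s t => f x s t * s)) x z t).
  apply derivable_pt_lim_scal with (f := fun y => I1 (fun x s t => f x s t * s) x z y).
  apply P_dt. apply P_I1. apply P_fr; auto.
  rewrite dt3_I1 by (apply P_fr; auto). rewrite dt3_fr by auto. reflexivity.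
Qed.
Lemma P_K f : P f -> P (Kop f).
Proof.
  intros Hf. pose proof Hf as [a1 [a2 [a3 [a4 a5]]]].
  split. apply C3_K; auto.
  split. rewrite dx3_K by auto. apply C3_K; auto.
  split. rewrite dt3_K by auto. apply C3_K; auto.
  split; intros.
  - eapply (dl_pderiv (fun y => Kop f y r t)). rewrite Kop_I1. apply derivable_pt_lim_scal with (f := fun y => I1 (fun x s t => f x s t * s) y r t).
    apply P_dx. apply P_I1. apply P_fr; auto.
  - eapply (dl_pderiv (fun y => Kop f x r y)). rewrite Kop_I1. apply derivable_pt_lim_scal with (f := fun y => I1 (fun x s t => f x s t * s) x r y).
    apply P_dt. apply P_I1. apply P_fr; auto.
Qed.
Definition J (Rad : F2) (g : F3) : F2 := fun x t => RInt (fun r => g x r t) 0 (Rad x t).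

Section JS.
Variable Rad : F2.
Hypothesis PR : P (L2 Rad).

Lemma CR_x : C3 (L2 (dx2 Rad)). Proof. exact (proj1 (proj2 PR)). Qed.
Lemma CR_t : C3 (L2 (dt2 Rad)). Proof. exact (proj1 (proj2 (proj2 PR))). Qed.
Lemma DR_x x t : is_derive (fun y => Rad y t) x (dx2 Rad x t).
Proof. apply is_derive_Reals. exact (P_dx (L2 Rad) x 0 t PR). Qed.
Lemma DR_t x t : is_derive (fun y => Rad x y) t (dt2 Rad x t).
Proof. apply is_derive_Reals. exact (P_dt (L2 Rad) x 0 t PR). Qed.

Lemma J_dx g : P g -> forall x t, derivable_pt_lim (fun y => J Rad g y t) x
   (I1 (dx3 g) x (Rad x t) t + g x (Rad x t) t * dx2 Rad x t).
Proof.
  intros Hg x t. pose proof Hg as [a1 [a2 [a3 [a4 a5]]]]. apply is_derive_Reals. unfold J.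
  apply (LB2_var (fun u v => g u v t) (fun u v => dx3 g u v t) (fun y => Rad y t)).
  apply C3_c2d_xr; auto. intros. apply is_derive_Reals. auto. apply C3_c2d_xr; auto.
  apply DR_x.
Qed.
Lemma J_dt g : P g -> forall x t, derivable_pt_lim (fun y => J Rad g x y) t
   (I1 (dt3 g) x (Rad x t) t + g x (Rad x t) t * dt2 Rad x t).
Proof.
  intros Hg x t. pose proof Hg as [a1 [a2 [a3 [a4 a5]]]]. apply is_derive_Reals. unfold J.
  apply (LB2_var (fun u v => g x v u) (fun u v => dt3 g x v u) (fun y => Rad x y)).
  apply C3_c2d_tr; auto. intros. apply is_derive_Reals. auto. apply C3_c2d_tr; auto.
  apply DR_t.
Qed.

Lemma P_J g : P g -> P (L2 (J Rad g)).
Proof.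
  intros Hg. pose proof Hg as [a1 [a2 [a3 [a4 a5]]]].
  assert (Ex : dx3 (L2 (J Rad g)) = fun x r t => I1 (dx3 g) x (Rad x t) t + g x (Rad x t) t * dx2 Rad x t).
  { apply F3_ext. intros. apply dx3_eq. apply J_dx; auto. }
  assert (Et : dt3 (L2 (J Rad g)) = fun x r t => I1 (dt3 g) x (Rad x t) t + g x (Rad x t) t * dt2 Rad x t).
  { apply F3_ext. intros. apply dt3_eq. apply J_dt; auto. }
  assert (CR : C3 (L2 Rad)) by apply PR.
  split. apply (C3_comp_r (I1 g) Rad). apply PCI; auto. auto.
  split. rewrite Ex. apply C3_plus. apply (C3_comp_r (I1 (dx3 g)) Rad). apply PCI; auto. auto.
  apply C3_mult. apply (C3_comp_r g Rad); auto. apply CR_x.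
  split. rewrite Et. apply C3_plus. apply (C3_comp_r (I1 (dt3 g)) Rad). apply PCI; auto. auto.
  apply C3_mult. apply (C3_comp_r g Rad); auto. apply CR_t.
  split; intros; [rewrite Ex | rewrite Et]. apply J_dx; auto. apply J_dt; auto.
Qed.
End JS.
Lemma avg_eq Rad f : C3 f -> forall x t,
  avg Rad f x t = 2 * / (Rad x t * Rad x t) * J Rad (fun x r t => f x r t * r) x t.
Proof.
  intros Hf x t. unfold avg, J. rewrite Rint_eq.
  unfold Rdiv. replace (Rad x t ^ 2) with (Rad x t * Rad x t) by ring. reflexivity.
  apply (C3_exRInt (fun x r t => f x r t * r)). apply C3_mult; auto. apply C3_r.
Qed.

Lemma P_avg Rad f : P (L2 Rad) -> (forall x t, 0 < Rad x t) -> P f -> P (L2 (avg Rad f)).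
Proof.
  intros PR Hpos Hf.
  replace (L2 (avg Rad f)) with (fun x r t => (fun _ _ _ => 2) x r t *
     (fun x r t => / (L2 Rad x r t * L2 Rad x r t)) x r t * L2 (J Rad (fun x r t => f x r t * r)) x r t).
  2:{ apply F3_ext. intros. unfold L2. rewrite avg_eq. reflexivity. apply Hf. }
  apply P_mult. apply P_mult. apply P_const. apply P_inv. apply P_mult; auto.
  intros. unfold L2. specialize (Hpos x t). apply Rmult_integral_contrapositive; split; lra.
  apply P_J; auto. apply P_fr; auto.
Qed.

Lemma P_smooth3 (f : F3) (S : F3 -> Prop) :
  (forall g, S g -> S (dx3 g) /\ S (dr3 g) /\ S (dt3 g) /\ forall x r t, True ->
     cont3_at g x r t /\ (exists l, derivable_pt_lim (fun y => g y r t) x l) /\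
     (exists l, derivable_pt_lim (fun y => g x y t) r l) /\ (exists l, derivable_pt_lim (fun y => g x r y) t l)) ->
  S f -> P f /\ C3 (dr3 f) /\ (forall x r t, derivable_pt_lim (fun y => f x y t) r (dr3 f x r t)).
Proof.
  intros HS Hf. destruct (HS f Hf) as [Sx [Sr [St Hc]]].
  split; [|split].
  - split. intros x r t. apply (Hc x r t I).
    split. intros x r t. apply (HS _ Sx). exact I.
    split. intros x r t. apply (HS _ St). exact I.
    split; intros x r t.
    + destruct (Hc x r t I) as [_ [[l Hl] _]]. rewrite (dx3_eq f x r t l Hl). auto.
    + destruct (Hc x r t I) as [_ [_ [_ [l Hl]]]]. rewrite (dt3_eq f x r t l Hl). auto.
  - intros x r t. apply (HS _ Sr). exact I.
  - intros x r t. destruct (Hc x r t I) as [_ [_ [[l Hl] _]]]. rewrite (dr3_eq f x r t l Hl). auto.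
Qed.

Lemma RInt_r b : RInt (fun r => r) 0 b = b ^ 2 / 2.
Proof.
  apply is_RInt_unique.
  replace (b ^ 2 / 2) with (minus ((fun r => r ^ 2 / 2) b) ((fun r => r ^ 2 / 2) 0)).
  2:{ simpl. unfold minus, plus, opp; simpl. field. }
  apply (is_RInt_derive (V := R_CompleteNormedModule) (fun r => r ^ 2 / 2) (fun r => r)).
  intros. auto_derive. auto. field.
  intros. apply continuous_id.
Qed.

Lemma iR_plus (f g : R -> R) a b (If Ig : R) : is_RInt f a b If -> is_RInt g a b Ig ->
  is_RInt (fun y => f y + g y) a b (If + Ig).
Proof. intros. apply (is_RInt_plus (V := R_NormedModule) f g); auto. Qed.
Lemma iR_scal k (f : R -> R) a b (If : R) : is_RInt f a b If -> is_RInt (fun y => k * f y) a b (k * If).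
Proof. intros. apply (is_RInt_scal (V := R_NormedModule) f); auto. Qed.
Lemma iR_ext (f g : R -> R) a b (If : R) : (forall y, f y = g y) -> is_RInt f a b If -> is_RInt g a b If.
Proof. intros H H1. apply (is_RInt_ext f); auto. Qed.
Lemma iR_ex (f : R -> R) a b : ex_RInt f a b -> is_RInt f a b (RInt f a b).
Proof. intros. apply (RInt_correct (V := R_CompleteNormedModule)); auto. Qed.

Lemma avg_zero Rad f : (forall x t, 0 < Rad x t) -> C3 f -> forall x t,
  RInt (fun r => (f x r t - avg Rad f x t) * r) 0 (Rad x t) = 0.
Proof.
  intros Hpos Hf x t. rewrite avg_eq by auto. unfold J.
  set (I := RInt (fun r => f x r t * r) 0 (Rad x t)).
  assert (Hi : is_RInt (fun r => f x r t * r + (- (2 * / (Rad x t * Rad x t) * I)) * r) 0 (Rad x t)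
             (I + (- (2 * / (Rad x t * Rad x t) * I)) * (Rad x t ^ 2 / 2))).
  { apply iR_plus. apply iR_ex. apply (C3_exRInt (fun x r t => f x r t * r)). apply C3_mult; auto. apply C3_r.
    apply iR_scal. rewrite <- RInt_r. apply iR_ex. apply (@ex_RInt_continuous R_CompleteNormedModule). intros; apply continuous_id. }
  assert (E : I + - (2 * / (Rad x t * Rad x t) * I) * (Rad x t ^ 2 / 2) = 0).
  { specialize (Hpos x t). field. lra. }
  rewrite E in Hi. apply is_RInt_unique. eapply iR_ext; [|exact Hi]. intros; simpl; ring.
Qed.
Lemma ode_lim (rho w : R -> R) (Rr Dd : R) : 0 < Rr -> (forall z, continuous rho z) ->
  (forall eps, 0 < eps -> exists delta, 0 < delta /\ forall r, 0 < r < delta -> Rabs (r * w r) < eps) ->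
  (forall e, 0 < e < Rr -> RInt rho e Rr = - Dd * (e * w e)) -> RInt rho 0 Rr = 0.
Proof.
  intros HR Hc Hw He.
  assert (HF : continuous (fun z => RInt rho z Rr) 0).
  { apply (continuous_RInt_2 rho 0 Rr). exists (mkposreal 1 Rlt_0_1). intros. apply iR_ex.
    apply (@ex_RInt_continuous R_CompleteNormedModule). intros; auto. }
  apply NNPP; intro Hn. set (F0 := RInt rho 0 Rr) in *.
  assert (Hep : 0 < Rabs F0 / 2) by (apply Rabs_pos_lt in Hn; lra).
  unfold continuous in HF. apply (proj1 (filterlim_locally _ _)) with (eps := mkposreal _ Hep) in HF.
  destruct HF as [d1 Hd1].
  assert (Hq : 0 < (Rabs F0 / 2) / (Rabs Dd + 1)).
  { apply Rdiv_lt_0_compat. lra. pose proof (Rabs_pos Dd). lra. }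
  destruct (Hw _ Hq) as [d2 [d2p Hd2]].
  pose proof (cond_pos d1) as d1p.
  set (e := Rmin (Rmin d1 d2) Rr / 2).
  assert (Hm : 0 < Rmin (Rmin d1 d2) Rr) by (repeat apply Rmin_pos; auto).
  pose proof (Rmin_l (Rmin d1 d2) Rr). pose proof (Rmin_r (Rmin d1 d2) Rr).
  pose proof (Rmin_l d1 d2). pose proof (Rmin_r d1 d2).
  assert (A1 : Rabs (RInt rho e Rr - F0) < Rabs F0 / 2).
  { apply (Hd1 e). apply ballR. unfold e. rewrite Rminus_0_r. rewrite Rabs_right; lra. }
  assert (A2 : Rabs (e * w e) < (Rabs F0 / 2) / (Rabs Dd + 1)).
  { apply Hd2. unfold e. lra. }
  rewrite He in A1 by (unfold e; lra).
  assert (A3 : Rabs (- Dd * (e * w e)) < Rabs F0 / 2).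
  { rewrite Rabs_mult, Rabs_Ropp. pose proof (Rabs_pos Dd). pose proof (Rabs_pos (e * w e)).
    apply Rle_lt_trans with ((Rabs Dd + 1) * Rabs (e * w e)). nra.
    apply Rlt_le_trans with ((Rabs Dd + 1) * ((Rabs F0 / 2) / (Rabs Dd + 1))).
    apply Rmult_lt_compat_l; lra. right; field; lra. }
  pose proof (Rabs_triang_inv F0 (- Dd * (e * w e))).
  replace (- Dd * (e * w e) - F0) with (- (F0 - - Dd * (e * w e))) in A1 by ring.
  rewrite Rabs_Ropp in A1. lra.
Qed.

Section Main.
Variables (Rad : F2) (Vx Vr : F3) (D : R) (C : F2) (G2 : F2) (W2 : F3).
Hypothesis HRpos : forall x t, 0 < Rad x t.
Hypothesis HRsm : smooth2 Rad.
Hypothesis HVxsm : smooth3 Vx.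
Hypothesis HVrsm : smooth3 Vr.
Hypothesis Hincomp : forall x r t, 0 <= r <= Rad x t ->
      dr3 (fun x r t => r * Vr x r t) x r t + r * dx3 Vx x r t = 0.
Hypothesis Hstream : forall x t,
      dt2 Rad x t + Vx x (Rad x t) t * dx2 Rad x t = Vr x (Rad x t) t.
Hypothesis HD : 0 < D.
Hypothesis HCsm : smooth2 C.
Hypothesis HW2sm : smooth3_on (fun _ r _ => 0 < r) W2.
Hypothesis HW2lim : forall x t eps, 0 < eps -> exists delta, 0 < delta /\
      forall r, 0 < r < delta -> Rabs (r * dr3 W2 x r t) < eps.
Hypothesis HW2bd : forall x t, dr3 W2 x (Rad x t) t = 0.
Hypothesis Heq : forall x r t, 0 < r <= Rad x t ->
      Lop D W2 x r t =
        dt3 (fun x r t => dx2 C x t * eta_tilde D Rad Vx x r t) x r t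
        + G2 x t
        - eta_tilde D Rad Vx x r t
            * dx2 (fun x t => dx2 C x t * avg Rad Vx x t) x t
        + Vx x r t
            * dx3 (fun x r t => dx2 C x t * eta_tilde D Rad Vx x r t) x r t
        + Vr x r t * dx2 C x t * dr3 (eta_tilde D Rad Vx) x r t.

Lemma PR : P (L2 Rad).
Proof. destruct HRsm as [S [HS HSg]]. apply (P_smooth2 Rad S); auto. Qed.
Lemma Pa : P (L2 (dx2 C)).
Proof. destruct HCsm as [S [HS HSg]]. apply (P_smooth2 (dx2 C) S); auto. apply HSg. auto. Qed.
Lemma PVx_all : P Vx /\ C3 (dr3 Vx) /\ (forall x r t, derivable_pt_lim (fun y => Vx x y t) r (dr3 Vx x r t)).
Proof. destruct HVxsm as [S [HS HSg]]. apply (P_smooth3 Vx S); auto. Qed.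
Lemma PVr_all : P Vr /\ C3 (dr3 Vr) /\ (forall x r t, derivable_pt_lim (fun y => Vr x y t) r (dr3 Vr x r t)).
Proof. destruct HVrsm as [S [HS HSg]]. apply (P_smooth3 Vr S); auto. Qed.
Lemma PVx : P Vx. Proof. apply PVx_all. Qed.
Lemma PVr : P Vr. Proof. apply PVr_all. Qed.

Lemma PA : P (L2 (avg Rad Vx)).
Proof. apply P_avg. apply PR. auto. apply PVx. Qed.

Definition Vt := V_tilde Rad Vx.
Lemma PVt : P Vt.
Proof. apply (P_minus Vx (L2 (avg Rad Vx))). apply PVx. apply PA. Qed.

Lemma eta_eq : eta D Rad Vx = fun x r t => / D * I1 (Kop Vt) x r t.
Proof.
  apply F3_ext. intros x r t. unfold eta.
  replace (fun z => / z * Rint (fun s => (Vx x s t - avg Rad Vx x t) * s) 0 z) with (fun z => Kop Vt x z t).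
  rewrite Rint_eq. reflexivity. apply C3_exRInt. apply C3_K. apply PVt.
  apply functional_extensionality. intros z. unfold Kop. rewrite Rint_eq. reflexivity.
  apply (C3_exRInt (fun x s t => Vt x s t * s)). apply C3_mult. apply PVt. apply C3_r.
Qed.

Lemma Peta : P (eta D Rad Vx).
Proof.
  rewrite eta_eq. apply (P_mult (fun _ _ _ => / D) (I1 (Kop Vt))). apply P_const.
  apply P_I1. apply P_K. apply PVt.
Qed.

Definition E := eta_tilde D Rad Vx.
Lemma PE : P E.
Proof. apply (P_minus (eta D Rad Vx) (L2 (avg Rad (eta D Rad Vx)))). apply Peta. apply P_avg. apply PR. auto. apply Peta. Qed.

Definition aE : F3 := fun x r t => dx2 C x t * E x r t.
Lemma PaE : P aE.
Proof. apply (P_mult (L2 (dx2 C)) E). apply Pa. apply PE. Qed.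

Lemma dr3_E : dr3 E = fun x r t => / D * Kop Vt x r t.
Proof.
  apply F3_ext. intros x r t. apply dr3_eq. unfold E, eta_tilde. rewrite eta_eq.
  replace (/ D * Kop Vt x r t) with (/ D * Kop Vt x r t - 0) by ring.
  apply (derivable_pt_lim_minus (fun y => / D * I1 (Kop Vt) x y t) (fun _ => avg Rad (fun x r t => / D * I1 (Kop Vt) x r t) x t)).
  apply derivable_pt_lim_scal with (f := fun y => I1 (Kop Vt) x y t).
  apply is_derive_Reals. unfold I1.
  apply (is_derive_RInt (V := R_NormedModule) (fun z => Kop Vt x z t) (fun y => RInt (fun z => Kop Vt x z t) 0 y) 0 r).
  exists (mkposreal 1 Rlt_0_1). intros. apply iR_ex. apply C3_exRInt. apply C3_K. apply PVt.
  apply C3_cont_r. apply C3_K. apply PVt.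
  apply derivable_pt_lim_const.
Qed.

Lemma CdrE : C3 (dr3 E).
Proof. rewrite dr3_E. apply (C3_mult (fun _ _ _ => / D) (Kop Vt)). apply C3_const. apply C3_K. apply PVt. Qed.
Lemma DrE x r t : derivable_pt_lim (fun y => E x y t) r (dr3 E x r t).
Proof.
  unfold E, eta_tilde. rewrite eta_eq. eapply dl_pderiv.
  apply (derivable_pt_lim_minus (fun y => / D * I1 (Kop Vt) x y t) (fun _ => avg Rad (fun x r t => / D * I1 (Kop Vt) x r t) x t)).
  apply derivable_pt_lim_scal with (f := fun y => I1 (Kop Vt) x y t).
  apply is_derive_Reals. unfold I1.
  apply (is_derive_RInt (V := R_NormedModule) (fun z => Kop Vt x z t) (fun y => RInt (fun z => Kop Vt x z t) 0 y) 0 r).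
  exists (mkposreal 1 Rlt_0_1). intros. apply iR_ex. apply C3_exRInt. apply C3_K. apply PVt.
  apply C3_cont_r. apply C3_K. apply PVt.
  apply derivable_pt_lim_const.
Qed.


Lemma E_zero x t : RInt (fun r => E x r t * r) 0 (Rad x t) = 0.
Proof. apply (avg_zero Rad (eta D Rad Vx)). auto. apply Peta. Qed.
Lemma Vt_zero x t : RInt (fun r => Vt x r t * r) 0 (Rad x t) = 0.
Proof. apply (avg_zero Rad Vx). auto. apply PVx. Qed.

Lemma aE_zero x t : J Rad (fun x r t => aE x r t * r) x t = 0.
Proof.
  unfold J.
  assert (H := iR_scal (dx2 C x t) _ _ _ _ (iR_ex (fun r => E x r t * r) 0 (Rad x t)
     (C3_exRInt (fun x r t => E x r t * r) x t 0 (Rad x t) (C3_mult _ _ (P_C3 _ PE) C3_r)))).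
  rewrite E_zero, Rmult_0_r in H. apply is_RInt_unique. eapply iR_ext; [|exact H].
  intros. unfold aE. ring.
Qed.

Lemma T1 x t : RInt (fun r => dt3 aE x r t * r) 0 (Rad x t) + aE x (Rad x t) t * Rad x t * dt2 Rad x t = 0.
Proof.
  pose proof (J_dt Rad PR (fun x r t => aE x r t * r) (P_fr aE PaE) x t) as H.
  rewrite dt3_fr in H by apply PaE.
  replace (fun y => J Rad (fun x r t => aE x r t * r) x y) with (fun _ : R => 0) in H.
  2:{ apply functional_extensionality. intros. rewrite aE_zero. auto. }
  symmetry. exact (uniqueness_limite _ _ _ _ (derivable_pt_lim_const 0 t) H).
Qed.
Lemma T4 x t : RInt (fun r => dx3 aE x r t * r) 0 (Rad x t) + aE x (Rad x t) t * Rad x t * dx2 Rad x t = 0.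
Proof.
  pose proof (J_dx Rad PR (fun x r t => aE x r t * r) (P_fr aE PaE) x t) as H.
  rewrite dx3_fr in H by apply PaE.
  replace (fun y => J Rad (fun x r t => aE x r t * r) y t) with (fun _ : R => 0) in H.
  2:{ apply functional_extensionality. intros. rewrite aE_zero. auto. }
  symmetry. exact (uniqueness_limite _ _ _ _ (derivable_pt_lim_const 0 x) H).
Qed.

Lemma dr_rVr x r t : dr3 (fun x r t => r * Vr x r t) x r t = Vr x r t + r * dr3 Vr x r t.
Proof.
  apply dr3_eq. replace (Vr x r t + r * dr3 Vr x r t) with (1 * Vr x r t + r * dr3 Vr x r t) by ring.
  apply (derivable_pt_lim_mult id (fun y => Vr x y t)). apply derivable_pt_lim_id. apply PVr_all.
Qed.

Lemma IBP x t : RInt (fun r => Vr x r t * dx2 C x t * dr3 E x r t * r) 0 (Rad x t) =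
  dx2 C x t * (Rad x t * Vr x (Rad x t) t * E x (Rad x t) t + RInt (fun r => r * dx3 Vx x r t * E x r t) 0 (Rad x t)).
Proof.
  pose proof PVr_all as [PVr' [CdrVr DrVr]].
  set (F := fun r => r * Vr x r t * E x r t).
  set (F' := fun r => (Vr x r t + r * dr3 Vr x r t) * E x r t + r * Vr x r t * dr3 E x r t).
  assert (HF : is_RInt F' 0 (Rad x t) (minus (F (Rad x t)) (F 0))).
  { apply (is_RInt_derive (V := R_CompleteNormedModule) F F').
    - intros y _. apply is_derive_Reals. unfold F, F'.
      replace ((Vr x y t + y * dr3 Vr x y t) * E x y t + y * Vr x y t * dr3 E x y t) with
        ((1 * Vr x y t + y * dr3 Vr x y t) * E x y t + y * Vr x y t * dr3 E x y t) by ring.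
      apply (derivable_pt_lim_mult (fun y => y * Vr x y t) (fun y => E x y t)).
      apply (derivable_pt_lim_mult id (fun y => Vr x y t)). apply derivable_pt_lim_id. apply DrVr.
      apply DrE.
    - intros y _. unfold F'. apply (C3_cont_r (fun x r t => (Vr x r t + r * dr3 Vr x r t) * E x r t + r * Vr x r t * dr3 E x r t)).
      apply C3_plus; apply C3_mult. apply C3_plus. apply PVr. apply C3_mult. apply C3_r. auto. apply PE.
      apply C3_mult. apply C3_r. apply PVr. apply CdrE. }
  assert (HQ : is_RInt (fun r => r * dx3 Vx x r t * E x r t) 0 (Rad x t) (RInt (fun r => r * dx3 Vx x r t * E x r t) 0 (Rad x t))).
  { apply iR_ex. apply (C3_exRInt (fun x r t => r * dx3 Vx x r t * E x r t)).
    apply C3_mult. apply C3_mult. apply C3_r. apply PVx. apply PE. }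
  pose proof (iR_plus _ _ _ _ _ _ HF HQ) as HS.
  assert (HS' : is_RInt (fun r => r * Vr x r t * dr3 E x r t) 0 (Rad x t)
     (minus (F (Rad x t)) (F 0) + RInt (fun r => r * dx3 Vx x r t * E x r t) 0 (Rad x t))).
  { apply (is_RInt_ext (V := R_NormedModule) (fun y => F' y + y * dx3 Vx x y t * E x y t)); auto.
    intros y Hy. rewrite Rmin_left, Rmax_right in Hy by (left; auto).
    unfold F'. pose proof (Hincomp x y t (conj (Rlt_le _ _ (proj1 Hy)) (Rlt_le _ _ (proj2 Hy)))) as Hi.
    rewrite dr_rVr in Hi.
    replace ((Vr x y t + y * dr3 Vr x y t) * E x y t + y * Vr x y t * dr3 E x y t + y * dx3 Vx x y t * E x y t)
      with ((Vr x y t + y * dr3 Vr x y t + y * dx3 Vx x y t) * E x y t + y * Vr x y t * dr3 E x y t) by ring.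
    rewrite Hi, Rmult_0_l, Rplus_0_l. reflexivity. }
  assert (EF : minus (F (Rad x t)) (F 0) = Rad x t * Vr x (Rad x t) t * E x (Rad x t) t).
  { unfold F. unfold minus, plus, opp; simpl. ring. }
  rewrite EF in HS'.
  apply is_RInt_unique. eapply iR_ext; [| apply (iR_scal (dx2 C x t)); exact HS'].
  intros. simpl. ring.
Qed.

Definition g5 : F3 := fun x r t => Vt x r t * aE x r t * r.
Lemma Pg5 : P g5.
Proof. apply (P_fr (fun x r t => Vt x r t * aE x r t)). apply P_mult. apply PVt. apply PaE. Qed.
Definition L4 x t := I1 (dx3 g5) x (Rad x t) t + g5 x (Rad x t) t * dx2 Rad x t.
Lemma J4_dx x t : derivable_pt_lim (fun y => J Rad g5 y t) x (L4 x t).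
Proof. apply J_dx. apply PR. apply Pg5. Qed.

Lemma dx3_Vt x r t : dx3 Vt x r t = dx3 Vx x r t - dx2 (avg Rad Vx) x t.
Proof.
  apply dx3_eq. apply (derivable_pt_lim_minus (fun y => Vx y r t) (fun y => avg Rad Vx y t)).
  apply PVx. exact (P_dx _ x r t PA).
Qed.

Lemma dx3_g5 x r t : dx3 g5 x r t =
  (dx3 Vx x r t - dx2 (avg Rad Vx) x t) * aE x r t * r + Vt x r t * dx3 aE x r t * r.
Proof.
  unfold g5. rewrite (dx3_fr (fun x r t => Vt x r t * aE x r t)).
  rewrite (dx3_mult Vt aE). rewrite dx3_Vt. ring. apply PVt. apply PaE.
  apply P_mult. apply PVt. apply PaE.
Qed.

Lemma Phi_eq x t : dx2 C x t * avg Rad (fun x r t => Rad x t ^ 2 * eta D Rad Vx x r t * V_tilde Rad Vx x r t) x t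
   = 2 * J Rad g5 x t.
Proof.
  rewrite avg_eq.
  2:{ apply C3_mult. apply C3_mult. replace (fun x (_ : R) t => Rad x t ^ 2) with (fun x r t => L2 Rad x r t * L2 Rad x r t).
      apply C3_mult; apply PR. apply F3_ext; intros; unfold L2; ring. apply Peta. apply PVt. }
  unfold J.
  assert (Hex : ex_RInt (fun r => eta D Rad Vx x r t * Vt x r t * r) 0 (Rad x t)).
  { apply (C3_exRInt (fun x r t => eta D Rad Vx x r t * Vt x r t * r)). apply C3_mult. apply C3_mult.
    apply Peta. apply PVt. apply C3_r. }
  set (I := RInt (fun r => eta D Rad Vx x r t * Vt x r t * r) 0 (Rad x t)).
  assert (H1 : RInt (fun r => Rad x t ^ 2 * eta D Rad Vx x r t * V_tilde Rad Vx x r t * r) 0 (Rad x t) = Rad x t ^ 2 * I).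
  { apply is_RInt_unique. eapply iR_ext; [| apply iR_scal; apply iR_ex; exact Hex].
    intros. unfold Vt. simpl. ring. }
  assert (H2 : RInt (fun r => g5 x r t) 0 (Rad x t) = dx2 C x t * I).
  { apply is_RInt_unique.
    pose proof (iR_plus _ _ _ _ _ _ (iR_scal (dx2 C x t) _ _ _ _ (iR_ex _ _ _ Hex))
       (iR_scal (- (dx2 C x t * avg Rad (eta D Rad Vx) x t)) _ _ _ _
          (iR_ex (fun r => Vt x r t * r) 0 (Rad x t)
            (C3_exRInt (fun x r t => Vt x r t * r) x t 0 (Rad x t) (C3_mult _ _ (P_C3 _ PVt) C3_r))))) as H.
    rewrite Vt_zero, Rmult_0_r, Rplus_0_r in H.
    eapply iR_ext; [| exact H]. intros. unfold g5, aE, E, eta_tilde. simpl. ring. }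
  rewrite H1, H2. specialize (HRpos x t). field. lra.
Qed.

Lemma Phi_deriv x t :
  dx2 (fun x t => dx2 C x t * avg Rad (fun x r t => Rad x t ^ 2 * eta D Rad Vx x r t * V_tilde Rad Vx x r t) x t) x t
  = 2 * L4 x t.
Proof.
  apply (pderiv_eq (fun y => dx2 C y t * avg Rad (fun x r t => Rad x t ^ 2 * eta D Rad Vx x r t * V_tilde Rad Vx x r t) y t)).
  replace (fun y => dx2 C y t * avg Rad (fun x r t => Rad x t ^ 2 * eta D Rad Vx x r t * V_tilde Rad Vx x r t) y t)
    with (fun y => 2 * J Rad g5 y t).
  apply derivable_pt_lim_scal with (f := fun y => J Rad g5 y t). apply J4_dx.
  apply functional_extensionality. intros. rewrite Phi_eq. auto.
Qed.

Definition Bc x t := dx2 (fun x t => dx2 C x t * avg Rad Vx x t) x t.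
Definition rhs x r t := dt3 aE x r t + G2 x t - E x r t * Bc x t + Vx x r t * dx3 aE x r t
   + Vr x r t * dx2 C x t * dr3 E x r t.

Lemma c3_cont_r_at f x r t : cont3_at f x r t -> continuous (fun z => f x z t) r.
Proof.
  intros H. unfold continuous. apply filterlim_locally. intros eps.
  destruct (H eps (cond_pos eps)) as [d [dp Hd]]. exists (mkposreal d dp). intros y Hy. apply ballR.
  apply Hd. rewrite Rminus_diag, Rabs_R0; auto. exact Hy. rewrite Rminus_diag, Rabs_R0; auto.
Qed.
Lemma c3_plus_at f g x r t : cont3_at f x r t -> cont3_at g x r t ->
  cont3_at (fun x r t => f x r t + g x r t) x r t.
Proof.
  intros Hf Hg. apply cont3_iff.
  apply (@continuous_plus _ _ R_NormedModule (unc f) (unc g)); apply cont3_iff; auto.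
Qed.

Lemma rho_zero x t : RInt (fun r => rhs x r t * r) 0 (Rad x t) = 0.
Proof.
  destruct HW2sm as [S [HSW HS]].
  destruct (HS W2 HSW) as [_ [SrW _]].
  destruct (HS _ SrW) as [_ [SrrW [_ HcW]]].
  destruct (HS _ SrrW) as [_ [_ [_ HcWW]]].
  apply (ode_lim (fun r => rhs x r t * r) (fun r => dr3 W2 x r t) (Rad x t) D).
  - auto.
  - intros z.
    apply (C3_cont_r (fun x' r t' => (dt3 aE x' r t' + G2 x t - E x' r t' * Bc x t + Vx x' r t' * dx3 aE x' r t'
       + Vr x' r t' * dx2 C x' t' * dr3 E x' r t') * r)).
    apply C3_mult; [| apply C3_r]. apply C3_plus. apply C3_plus. apply C3_minus. apply C3_plus.
    apply PaE. apply C3_const. apply C3_mult. apply PE. apply C3_const.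
    apply C3_mult. apply PVx. apply PaE.
    apply C3_mult. apply C3_mult. apply PVr. apply Pa. apply CdrE.
  - apply HW2lim.
  - intros e He.
    set (U := fun y => y * dr3 W2 x y t).
    set (U' := fun y => 1 * dr3 W2 x y t + y * dr3 (dr3 W2) x y t).
    assert (HU : is_RInt U' e (Rad x t) (minus (U (Rad x t)) (U e))).
    { apply (is_RInt_derive (V := R_CompleteNormedModule) U U').
      - intros y Hy. rewrite Rmin_left, Rmax_right in Hy by lra.
        apply is_derive_Reals. unfold U, U'.
        apply (derivable_pt_lim_mult id (fun z => dr3 W2 x z t)). apply derivable_pt_lim_id.
        destruct (HcW x y t ltac:(simpl; lra)) as [_ [_ [[l Hl] _]]].
        rewrite (dr3_eq (dr3 W2) x y t l Hl). exact Hl.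
      - intros y Hy. rewrite Rmin_left, Rmax_right in Hy by lra. unfold U'.
        apply (c3_cont_r_at (fun x r t => 1 * dr3 W2 x r t + r * dr3 (dr3 W2) x r t)).
        apply c3_plus_at. apply c3_mult_at. apply C3_const. apply (HcW x y t). simpl; lra.
        apply c3_mult_at. apply C3_r. apply (HcWW x y t). simpl; lra. }
    pose proof (iR_scal D _ _ _ _ HU) as HU2.
    assert (HU3 : is_RInt (fun r => rhs x r t * r) e (Rad x t) (D * minus (U (Rad x t)) (U e))).
    { apply (is_RInt_ext (V := R_NormedModule) (fun y => D * U' y)); auto.
      intros y Hy. rewrite Rmin_left, Rmax_right in Hy by lra.
      pose proof (Heq x y t ltac:(lra)) as Hq. change (Lop D W2 x y t = rhs x y t) in Hq.
      rewrite <- Hq. unfold Lop, U'. simpl. field. lra. }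
    rewrite (is_RInt_unique _ _ _ _ HU3). unfold U. rewrite HW2bd.
    unfold minus, plus, opp; simpl. ring.
Qed.

Lemma final_id x t : G2 x t * (Rad x t ^ 2 / 2) + L4 x t = 0.
Proof.
  set (R0 := Rad x t). set (a := dx2 C x t). set (A := avg Rad Vx x t).
  set (Ax := dx2 (avg Rad Vx) x t). set (B := Bc x t).
  assert (h1 : is_RInt (fun r => dt3 aE x r t * r) 0 R0 (- (aE x R0 t * R0 * dt2 Rad x t))).
  { replace (- (aE x R0 t * R0 * dt2 Rad x t)) with (RInt (fun r => dt3 aE x r t * r) 0 R0).
    apply iR_ex. apply (C3_exRInt (fun x r t => dt3 aE x r t * r)). apply C3_mult. apply PaE. apply C3_r.
    pose proof (T1 x t). unfold R0. lra. }
  assert (h2 : is_RInt (fun r => r) 0 R0 (R0 ^ 2 / 2)).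
  { rewrite <- RInt_r. apply iR_ex. apply (@ex_RInt_continuous R_CompleteNormedModule). intros; apply continuous_id. }
  assert (h3 : is_RInt (fun r => E x r t * r) 0 R0 0).
  { pose proof (iR_ex (fun r => E x r t * r) 0 R0 (C3_exRInt (fun x r t => E x r t * r) x t 0 R0 (C3_mult _ _ (P_C3 _ PE) C3_r))) as H.
    unfold R0 in H. rewrite E_zero in H. exact H. }
  assert (h4 : is_RInt (fun r => dx3 aE x r t * r) 0 R0 (- (aE x R0 t * R0 * dx2 Rad x t))).
  { replace (- (aE x R0 t * R0 * dx2 Rad x t)) with (RInt (fun r => dx3 aE x r t * r) 0 R0).
    apply iR_ex. apply (C3_exRInt (fun x r t => dx3 aE x r t * r)). apply C3_mult. apply PaE. apply C3_r.
    pose proof (T4 x t). unfold R0. lra. }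
  assert (h5 : is_RInt (fun r => dx3 g5 x r t) 0 R0 (L4 x t - g5 x R0 t * dx2 Rad x t)).
  { assert (E5 : @eq R (RInt (fun r => dx3 g5 x r t) 0 R0) (L4 x t - g5 x R0 t * dx2 Rad x t)).
    { unfold L4, I1, R0. unfold Rminus. rewrite Rplus_assoc, Rplus_opp_r, Rplus_0_r. reflexivity. }
    rewrite <- E5. apply iR_ex. apply C3_exRInt. apply Pg5. }
  assert (hq : is_RInt (fun r => r * dx3 Vx x r t * E x r t) 0 R0 (RInt (fun r => r * dx3 Vx x r t * E x r t) 0 R0)).
  { apply iR_ex. apply (C3_exRInt (fun x r t => r * dx3 Vx x r t * E x r t)).
    apply C3_mult. apply C3_mult. apply C3_r. apply PVx. apply PE. }
  assert (hI : is_RInt (fun r => Vr x r t * a * dr3 E x r t * r) 0 R0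
      (a * (R0 * Vr x R0 t * E x R0 t + RInt (fun r => r * dx3 Vx x r t * E x r t) 0 R0))).
  { pose proof (IBP x t) as HB. fold a R0 in HB. rewrite <- HB. apply iR_ex. apply (C3_exRInt (fun x r t => Vr x r t * dx2 C x t * dr3 E x r t * r)).
    apply C3_mult. apply C3_mult. apply C3_mult. apply PVr. apply Pa. apply CdrE. apply C3_r. }
  pose proof (iR_plus _ _ _ _ _ _ h1 (iR_plus _ _ _ _ _ _ (iR_scal (G2 x t) _ _ _ _ h2)
    (iR_plus _ _ _ _ _ _ (iR_scal (- B) _ _ _ _ h3) (iR_plus _ _ _ _ _ _ (iR_scal A _ _ _ _ h4)
    (iR_plus _ _ _ _ _ _ h5 (iR_plus _ _ _ _ _ _ (iR_scal (- a) _ _ _ _ hq)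
    (iR_plus _ _ _ _ _ _ (iR_scal (Ax * a) _ _ _ _ h3) hI))))))) as HS.
  assert (HS2 : is_RInt (fun r => rhs x r t * r) 0 R0
     (- (aE x R0 t * R0 * dt2 Rad x t) + (G2 x t * (R0 ^ 2 / 2) + (- B * 0 + (A * - (aE x R0 t * R0 * dx2 Rad x t) +
      (L4 x t - g5 x R0 t * dx2 Rad x t + (- a * RInt (fun r => r * dx3 Vx x r t * E x r t) 0 R0 +
      (Ax * a * 0 + a * (R0 * Vr x R0 t * E x R0 t + RInt (fun r => r * dx3 Vx x r t * E x r t) 0 R0))))))))).
  { eapply iR_ext; [| exact HS]. intros r. simpl. rewrite dx3_g5.
    unfold rhs, Vt, V_tilde. fold A. fold a. fold Ax. fold B.
    match goal with |- ?L = ?Rr => change (@eq R L Rr) end. unfold aE. fold a. ring. }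
  pose proof (is_RInt_unique _ _ _ _ HS2) as HU. pose proof (rho_zero x t) as HZ. fold R0 in HZ.
  rewrite HZ in HU.
  pose proof (Hstream x t) as Hs. fold R0 in Hs.
  unfold g5, aE, Vt, V_tilde in HU. fold a A R0 in HU. rewrite <- Hs in HU.
  lra.
Qed.

Lemma main_sec : forall x t,
    G2 x t =
      - (/ (Rad x t) ^ 2)
        * dx2 (fun x t =>
                 dx2 C x t
                 * avg Rad (fun x r t =>
                              (Rad x t) ^ 2 * eta D Rad Vx x r t
                              * V_tilde Rad Vx x r t) x t) x t.
Proof.
  intros x t. rewrite Phi_deriv. pose proof (final_id x t) as H.
  assert (L4 x t = - (G2 x t * (Rad x t ^ 2 / 2))) as H2 by lra. rewrite H2.
  specialize (HRpos x t). field. lra.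
Qed.
End Main.

Theorem mainTheorem2
  (Rad : F2) (Vx Vr : F3) (D : R) (C : F2) (G2 : F2) (W2 : F3)
  (HRpos : forall x t, 0 < Rad x t)
  (HRsm : smooth2 Rad)
  (HVxsm : smooth3 Vx)
  (HVrsm : smooth3 Vr)
  (Hincomp : forall x r t, 0 <= r <= Rad x t ->
      dr3 (fun x r t => r * Vr x r t) x r t + r * dx3 Vx x r t = 0)
  (Hstream : forall x t,
      dt2 Rad x t + Vx x (Rad x t) t * dx2 Rad x t = Vr x (Rad x t) t)
  (HD : 0 < D)
  (HCsm : smooth2 C)
  (HW2sm : smooth3_on (fun _ r _ => 0 < r) W2)
  (HW2lim : forall x t eps, 0 < eps -> exists delta, 0 < delta /\
      forall r, 0 < r < delta -> Rabs (r * dr3 W2 x r t) < eps)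
  (HW2bd : forall x t, dr3 W2 x (Rad x t) t = 0)
  (Heq : forall x r t, 0 < r <= Rad x t ->
      Lop D W2 x r t =
        dt3 (fun x r t => dx2 C x t * eta_tilde D Rad Vx x r t) x r t
        + G2 x t
        - eta_tilde D Rad Vx x r t
            * dx2 (fun x t => dx2 C x t * avg Rad Vx x t) x t
        + Vx x r t
            * dx3 (fun x r t => dx2 C x t * eta_tilde D Rad Vx x r t) x r t
        + Vr x r t * dx2 C x t * dr3 (eta_tilde D Rad Vx) x r t) :
  forall x t,
    G2 x t =
      - (/ (Rad x t) ^ 2)
        * dx2 (fun x t =>
                 dx2 C x t
                 * avg Rad (fun x r t =>
                              (Rad x t) ^ 2 * eta D Rad Vx x r t
                              * V_tilde Rad Vx x r t) x t) x t.
Proof.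
  intros x t. eapply main_sec; eassumption.
Qed.
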